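(* Every nonempty saturated subspace of an $S^{\ast}$-well-filtered space is $S^{\ast}$-well-filtered.
   Context: All spaces are $T_0$. The specialization order of $X$ is given by $x\le y$ iff $x\in cl(\{y\})$; ${\uparrow}$ is taken with respect to it; a subset is saturated if it equals the intersection of all open sets containing it (equivalently, it is an upper set in the specialization order). $K(X)$ denotes the set of all nonempty compact saturated subsets of $X$; a family in $K(X)$ is filtered if any two members contain a common member. $X$ is $S^{\ast}$-well-filtered if for every filtered family $\{K_i\mid i\in I\}\subseteq K(X)$, every $G\in K(X)$ and every nonempty open $U$, $\bigcap_{i\in I}K_i\cap G\subseteq U$ implies $K_i\cap G\subseteq U$ for some $i$. *)

(* Defs.v *)
From HB Require Import structures.
From mathcomp Require Import all_boot all_order all_algebra.
From mathcomp Require Import all_classical all_reals all_analysis.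
Set Implicit Arguments. Unset Strict Implicit. Unset Printing Implicit Defensive.
Local Open Scope classical_set_scope.

Section Defs.
Context {T : topologicalType}.

Definition spec_le (x y : T) : Prop := closure [set y] x.

Definition saturated (A : set T) : Prop :=
  A = \bigcap_(U in [set U : set T | open U /\ A `<=` U]) U.

Definition KX (K : set T) : Prop := K !=set0 /\ compact K /\ saturated K.

Definition filtered_family (I : Type) (K : I -> set T) : Prop :=
  inhabited I /\ (forall i, KX (K i)) /\
  (forall i j, exists k, K k `<=` K i /\ K k `<=` K j).

End Defs.

Definition S_star_well_filtered (X : topologicalType) : Prop :=
  forall (I : Type) (K : I -> set X) (G U : set X),
    filtered_family K -> KX G -> open U -> U !=set0 ->
    (\bigcap_i K i) `&` G `<=` U -> exists i, K i `&` G `<=` U.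

(* Main.v *)
Require Import Defs.
From HB Require Import structures.
From mathcomp Require Import all_boot all_order all_algebra.
From mathcomp Require Import all_classical all_reals all_analysis.
Local Open Scope classical_set_scope.

Section P. Variables (T : topologicalType) (t : T).
Definition pT : Type := T.
HB.instance Definition _ := Topological.on pT.
HB.instance Definition _ := isPointed.Build pT t.
Lemma compact_coverT (A : set T) : compact A = cover_compact A.
Proof. exact (congr1 (fun g => g A) (@compact_cover pT)). Qed.
End P.
Arguments compact_coverT {T} t A.

Section Sat.
Variable T : topologicalType.
Definition sat (B : set T) := \bigcap_(U in [set U : set T | open U /\ B `<=` U]) U.

Lemma sat_sub B : B `<=` sat B.
Proof. by move=> x Bx U [_ BU]; apply: BU. Qed.

Lemma sat_min B U : open U -> B `<=` U -> sat B `<=` U.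
Proof. by move=> oU BU x; apply; split. Qed.

Lemma sat_mono B C : B `<=` C -> sat B `<=` sat C.
Proof. by move=> BC x sx U [oU CU]; apply: sx; split => // y /BC /CU. Qed.

Lemma sat_saturated B : saturated (sat B).
Proof.
rewrite /saturated; apply/seteqP; split.
  by move=> x sx U [oU sU]; apply: sU.
move=> x sx U [oU BU]; apply: sx; split => //.
exact: sat_min.
Qed.
End Sat.
Arguments sat {T} B.

Section Main.
Variables (X : topologicalType) (A : set X).
Local Notation Y := (set_type A).

Lemma val_in (y : Y) : A (set_val y).
Proof. case: y => x h /=; exact: (set_mem h). Qed.

Lemma sat_compact (y0 : Y) (K : set Y) :
  compact K -> compact (sat (set_val @` K)).
Proof.
rewrite (compact_coverT y0) (compact_coverT (set_val y0)) => cK I D f fop cov.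
have o1 : forall i, D i -> open (set_val @^-1` f i : set Y).
  by move=> i Di; exists (f i) => //; apply: fop.
have c1 : K `<=` cover D (fun i => set_val @^-1` f i).
  by move=> y Ky; apply: cov; apply: sat_sub; exists y.
have [D' sub cov'] := cK I D (fun i => set_val @^-1` f i) o1 c1.
exists D' => //; apply: sat_min.
  apply: bigcup_open => i Di; apply: fop.
  by have := sub i Di; rewrite inE.
by move=> _ [y Ky <-]; have [i Di fi] := cov' y Ky; exists i.
Qed.

Lemma sat_inA (B : set Y) : saturated A -> sat (set_val @` B) `<=` A.
Proof.
move=> sA x sx; rewrite sA => V [oV AV]; apply: sx; split => //.
by move=> _ [y _ <-]; apply: AV; apply: val_in.
Qed.

Lemma sat_back (K : set Y) (y : Y) : saturated K ->
  sat (set_val @` K) (set_val y) -> K y.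
Proof.
move=> sK sy; rewrite sK => W [[V oV e] KW].
rewrite -e /=; apply: sy; split => //.
by move=> _ [z Kz <-]; have := KW z Kz; rewrite -e.
Qed.

Lemma KX_sat (K : set Y) : saturated A -> KX K -> KX (sat (set_val @` K)).
Proof.
move=> sA [[y Ky] [cK sK]]; split; last split.
- by exists (set_val y); apply: sat_sub; exists y.
- exact: (sat_compact y).
- exact: sat_saturated.
Qed.
End Main.

Theorem mainTheorem15 (X : topologicalType) (A : set X) :
  kolmogorov_space X -> S_star_well_filtered X ->
  A !=set0 -> saturated A ->
  S_star_well_filtered (set_type A).
Proof.
move=> _ swf _ sA I K G U [inhI [KK Kf]] KG [V oV e] [u Uu] H.
have [|||||i Hi] := swf I (fun i => sat (set_val @` K i)) (sat (set_val @` G)) V.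
- split => //; split; first by move=> i; apply: KX_sat.
  move=> i j; have [k [ki kj]] := Kf i j; exists k.
  by split; apply: sat_mono; apply: image_subset.
- exact: KX_sat.
- exact: oV.
- by exists (set_val u); rewrite -e in Uu.
- move=> x [xK xG].
  have Ax : A x := @sat_inA X A G sA x xG.
  pose y : set_type A := exist _ x (mem_set Ax).
  have : U y.
    apply: H; split.
      move=> i _; apply: sat_back; first by case: (KK i) => _ [].
      exact: xK.
    by apply: sat_back; first by case: KG => _ [].
  by rewrite -e.
- exists i => y [Ky Gy]; rewrite -e /=; apply: Hi; split.
    by apply: sat_sub; exists y.
  by apply: sat_sub; exists y.
Qed.
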